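(* Let $h\ge-1$ be an integer and $n\ge0$, excluding the case $(n,h)=(0,-1)$. The number of partitions $\lambda\vdash n$ having an $h$-fixed hook arising from a part of size $1$ equals the number of partitions of $n$ in which the part $1$ occurs exactly $h+1$ times. Equivalently, the generating function of the former is $q^{h+1}/(q^2;q)_\infty$ for $h\ge0$ and $1/(q^2;q)_\infty-1$ for $h=-1$.
   Context: A partition $\lambda=(\lambda_1\ge\cdots\ge\lambda_t>0)$ of $n$ has first-column hook lengths $h_{s,1}(\lambda)=\lambda_s+(t-s)$. An $h$-fixed hook arising from a part of size $k$ is an index $s$ with $h_{s,1}(\lambda)=s+h$ and $\lambda_s=k$. Notation: $(a;q)_\infty=\prod_{j\ge0}(1-aq^j)$. *)

(* Defs.v *)
From mathcomp Require Import all_boot all_order all_algebra ssrint.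
Set Implicit Arguments. Unset Strict Implicit. Unset Printing Implicit Defensive.
Import Order.TTheory GRing.Theory Num.Theory.

Definition is_partition (n : nat) (lam : seq nat) : bool :=
  [&& sorted geq lam, all (fun x => 0 < x) lam & sumn lam == n].

(* Partitions of n are encoded bijectively by nonincreasing n-tuples with
   entries in [0..n] and sum n (the partition padded with zeros). *)
Definition tuple_code (n : nat) (t : n.-tuple 'I_n.+1) : bool :=
  sorted geq (map val t) && (sumn (map val t) == n).

Definition part_of_code (n : nat) (t : n.-tuple 'I_n.+1) : seq nat :=
  filter (fun x => 0 < x) (map val t).

(* First-column hook length h_{s,1}(lam) = lam_s + (t - s), s 1-indexed,
   t = number of parts. *)
Definition hook1 (lam : seq nat) (s : nat) : nat :=
  nth 0 lam s.-1 + (size lam - s).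

Definition has_fixed_hook (h : int) (k : nat) (lam : seq nat) : bool :=
  has (fun s => (Posz (hook1 lam s) == (Posz s + h)%R) && (nth 0 lam s.-1 == k))
      (iota 1 (size lam)).

Definition card_partitions_with (n : nat) (P : seq nat -> bool) : nat :=
  #|[set t : n.-tuple 'I_n.+1 | tuple_code t && P (part_of_code t)]|.

(* Main.v *)
Require Import Defs.
From mathcomp Require Import all_boot all_order all_algebra ssrint zify.
Import Order.TTheory GRing.Theory Num.Theory.

Lemma geq_trans : transitive geq.
Proof. move=> x y z /= H1 H2; exact: leq_trans H2 H1. Qed.

Lemma sorted_cat_geq k (s t : seq nat) :
  sorted geq s -> sorted geq t -> all (fun x => k <= x) s ->
  all (fun y => y <= k) t -> sorted geq (s ++ t).
Proof.
case: s => [|x s] //= Hs Ht /andP[Hx Hall] Htk.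
rewrite cat_path Hs /=.
case: t Ht Htk => [|y t] //= Ht /andP[Hy _]; rewrite Ht andbT.
have : last x s \in x :: s by apply: mem_last.
rewrite inE => /orP[/eqP ->|Hm]; first exact: leq_trans Hy Hx.
by apply: leq_trans Hy _; move/allP: Hall; apply.
Qed.

Lemma split_sorted k (s : seq nat) : sorted geq s ->
  s = filter (fun x => k < x) s ++ filter (fun x => x <= k) s.
Proof.
elim: s => //= x s IH H.
have Hs := path_sorted H.
case: (ltnP k x) => Hkx /=.
  by rewrite -IH.
have Hall := order_path_min geq_trans H.
have -> : filter (fun x => k < x) s = [::].
  apply/eqP; rewrite -[_ == _]negbK -has_filter; apply/hasPn => y Hy.
  move/allP: Hall => /(_ y Hy) /= Hyx; rewrite -leqNgt; exact: leq_trans Hyx Hkx.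
have -> // : filter (fun x => x <= k) s = s.
apply/all_filterP/allP => y Hy; move/allP: Hall => /(_ y Hy) /= Hyx; exact: leq_trans Hyx Hkx.
Qed.

Lemma count0 (a : pred nat) s : (forall x, x \in s -> ~~ a x) -> count a s = 0.
Proof. by move=> H; apply/eqP; rewrite -leqn0 leqNgt -has_count; apply/hasPn. Qed.

Lemma sumn_mapS s : sumn (map S s) = sumn s + size s.
Proof. elim: s => //= x s ->; lia. Qed.

Lemma sumn_mappred s : all (fun x => 0 < x) s -> sumn (map predn s) + size s = sumn s.
Proof. elim: s => //= x s IH /andP[Hx Hs]; move: (IH Hs); lia. Qed.

Lemma mem_le_sumn x s : x \in s -> x <= sumn s.
Proof. elim: s => //= y s IH; rewrite inE => /orP[/eqP ->|/IH]; lia. Qed.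

Lemma size_le_sumn s : all (fun x => 0 < x) s -> size s <= sumn s.
Proof. elim: s => //= x s IH /andP[Hx /IH]; lia. Qed.

Definition nu (l : seq nat) := filter (fun x => 1 < x) l.

Lemma decomp1 l : sorted geq l -> all (fun x => 0 < x) l ->
  l = nu l ++ nseq (count_mem 1 l) 1.
Proof.
move=> Hs Hp; rewrite {1}(split_sorted 1 l Hs) /nu; congr (_ ++ _).
have Ha : all (pred1 1) (filter (fun x => x <= 1) l).
  apply/allP => x; rewrite mem_filter => /andP[H1 Hx].
  move/allP: Hp => /(_ x Hx) /= H0; apply/eqP; lia.
rewrite (all_pred1P _ _ Ha) size_filter; congr nseq.
apply: eq_in_count => x Hx; move/allP: Hp => /(_ x Hx) /= H0.
apply/idP/eqP; lia.
Qed.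

Lemma decomp21 t : sorted geq t -> all (fun x => 0 < x) t -> all (fun x => x <= 2) t ->
  t = nseq (count_mem 2 t) 2 ++ nseq (count_mem 1 t) 1.
Proof.
elim: t => //= x t IH H /andP[Hx Hp] /andP[Hx2 Ha].
have Hs := path_sorted H.
have := IH Hs Hp Ha.
case: (x =P 2) => [->|Hn2] Ht /=.
  by rewrite [in LHS]Ht.
have Hx1 : x = 1 by lia.
have Hall := order_path_min geq_trans H.
have H2 : count_mem 2 t = 0.
  apply: count0 => y Hy; move/allP: Hall => /(_ y Hy) /=; rewrite Hx1; lia.
rewrite Hx1 H2 /= in Ht *.
by rewrite [in LHS]Ht.
Qed.

Definition nu2 (l : seq nat) := filter (fun x => 2 < x) l.

Lemma decomp2 l : sorted geq l -> all (fun x => 0 < x) l ->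
  l = nu2 l ++ nseq (count_mem 2 l) 2 ++ nseq (count_mem 1 l) 1.
Proof.
move=> Hs Hp; rewrite {1}(split_sorted 2 l Hs) /nu2; congr (_ ++ _).
set t := filter (fun x => x <= 2) l.
have Ht : t = nseq (count_mem 2 t) 2 ++ nseq (count_mem 1 t) 1.
  apply: decomp21; first exact: (sorted_filter geq_trans (fun x => x <= 2) Hs).
    by apply/allP => x; rewrite mem_filter => /andP[_ Hx]; move/allP: Hp; apply.
  exact: filter_all.
rewrite {1}Ht /t !count_filter; congr (nseq _ _ ++ nseq _ _); apply: eq_count => x /=;
  by case: eqP => // ->.
Qed.

Lemma sorted_nseq_geq n x : sorted geq (nseq n x).
Proof. case: n => //= n; elim: n => //= n ->; by rewrite leqnn. Qed.

Lemma mapSK s : map predn (map S s) = s.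
Proof. by elim: s => //= x s ->. Qed.

Lemma mappredK s : all (fun x => 0 < x) s -> map S (map predn s) = s.
Proof. elim: s => //= x s IH /andP[Hx /IH ->]; congr (_ :: _); lia. Qed.

Definition fmap e l := map S (nu l) ++ nseq ((count_mem 1 l - (size (nu l) + e))./2) 2 ++ nseq e 1.
Definition gmap e l := map predn (nu2 l) ++ nseq (size (nu2 l) + e + (count_mem 2 l).*2) 1.
Definition condP e l := (size (nu l) + e <= count_mem 1 l) && ~~ odd (count_mem 1 l - (size (nu l) + e)).

Lemma f_ok (e : nat) n l : is_partition n l -> condP e l ->
  [/\ is_partition n (fmap e l), count_mem 1 (fmap e l) == e & gmap e (fmap e l) = l].
Proof.
move=> /and3P[Hs Hp /eqP Hn] /andP[Hle Hev].
have Hd := decomp1 l Hs Hp.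
have Hν : all (fun x => 1 < x) (nu l) := filter_all _ _.
have Hsν : sorted geq (nu l) := sorted_filter geq_trans (fun x => 1 < x) Hs.
rewrite /fmap.
move: Hd Hle Hev Hν Hsν; set ν := nu l; set m := count_mem 1 l => Hd Hle Hev Hν Hsν.
set j := (m - (size ν + e))./2.
have Hj : m = size ν + e + j.*2.
  have := odd_double_half (m - (size ν + e)); rewrite (negbTE Hev) add0n -/j; lia.
have HS : all (fun x => 2 < x) (map S ν).
  by rewrite all_map; apply: sub_all Hν => x /=.
have HS1 : count_mem 1 (map S ν) = 0.
  apply: count0 => x /mapP[y Hy ->]; move/allP: Hν => /(_ y Hy) /=; lia.
have HS2 : count_mem 2 (map S ν) = 0.
  apply: count0 => x /mapP[y Hy ->]; move/allP: Hν => /(_ y Hy) /=; lia.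
split.
- apply/and3P; split.
  + apply: (sorted_cat_geq 2).
    * by rewrite sorted_map; apply: sub_sorted Hsν => x y /=.
    * apply: (sorted_cat_geq 1); rewrite ?sorted_nseq_geq //; by rewrite all_nseq /= orbT.
    * by apply: sub_all HS => x /= /ltnW.
    * by rewrite all_cat !all_nseq /= !orbT.
  + rewrite !all_cat !all_nseq /= !orbT !andbT.
    by apply: sub_all HS => x /= H; lia.
  + apply/eqP; rewrite !sumn_cat !sumn_nseq sumn_mapS -Hn Hd sumn_cat sumn_nseq.
    lia.
- by rewrite !count_cat !count_nseq HS1 /= mul0n mul1n add0n.
- rewrite /gmap /nu2. rewrite !filter_cat !filter_nseq /= cats0.
  rewrite (all_filterP HS) !count_cat !count_nseq HS2 /= mapSK size_map.
  rewrite [RHS]Hd; congr (_ ++ nseq _ _); lia.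
Qed.

Lemma g_ok (e : nat) n l : is_partition n l -> count_mem 1 l == e ->
  [/\ is_partition n (gmap e l), condP e (gmap e l) & fmap e (gmap e l) = l].
Proof.
move=> /and3P[Hs Hp /eqP Hn] /eqP He.
have Hd := decomp2 l Hs Hp.
have Hν : all (fun x => 2 < x) (nu2 l) := filter_all _ _.
have Hsν : sorted geq (nu2 l) := sorted_filter geq_trans (fun x => 2 < x) Hs.
rewrite He in Hd; rewrite /gmap.
move: Hd Hν Hsν; set ν := nu2 l; set c := count_mem 2 l => Hd Hν Hsν.
have HP : all (fun x => 1 < x) (map predn ν).
  rewrite all_map; apply: sub_all Hν => x /=; lia.
have HP1 : count_mem 1 (map predn ν) = 0.
  apply: count0 => x /mapP[y Hy ->]; move/allP: Hν => /(_ y Hy) /=; lia.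
have Hν0 : all (fun x => 0 < x) ν by apply: sub_all Hν => x /=; lia.
have Hnu : nu (map predn ν ++ nseq (size ν + e + c.*2) 1) = map predn ν.
  rewrite /nu filter_cat filter_nseq /= cats0; exact: (all_filterP HP).
have Hc1 : count_mem 1 (map predn ν ++ nseq (size ν + e + c.*2) 1) = size ν + e + c.*2.
  by rewrite count_cat count_nseq HP1 /= mul1n.
split.
- apply/and3P; split.
  + apply: (sorted_cat_geq 1).
    * by apply: (homo_sorted _ _ Hsν) => x y /=; lia.
    * exact: sorted_nseq_geq.
    * by apply: sub_all HP => x /= /ltnW.
    * by rewrite all_nseq /= orbT.
  + rewrite !all_cat !all_nseq /= !orbT !andbT.
    by apply: sub_all HP => x /= H; lia.
  + apply/eqP; rewrite !sumn_cat !sumn_nseq -Hn Hd !sumn_cat !sumn_nseq.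
    have := sumn_mappred ν Hν0; lia.
- rewrite /condP Hnu Hc1 size_map.
  have -> : size ν + e + c.*2 - (size ν + e) = c.*2 by lia.
  by rewrite leq_addr odd_double.
- rewrite /fmap Hnu Hc1 size_map.
  have -> : size ν + e + c.*2 - (size ν + e) = c.*2 by lia.
  by rewrite doubleK (mappredK ν Hν0) [RHS]Hd.
Qed.

Lemma hook_cond (e : nat) ν m : all (fun x => 1 < x) ν -> 0 < size ν + m + e ->
  has_fixed_hook (Posz e - 1) 1 (ν ++ nseq m 1) = (size ν + e <= m) && ~~ odd (m - (size ν + e)).
Proof.
move=> Hν Hpos; rewrite /has_fixed_hook size_cat size_nseq.
apply/hasP/andP.
- case=> s; rewrite mem_iota => /andP[H1 H2] /andP[Hh /eqP Hn].
  have Hs : size ν <= s.-1.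
    rewrite leqNgt; apply/negP => Hlt; move: Hn; rewrite nth_cat Hlt => Hn.
    move/allP: Hν => /(_ _ (mem_nth 0 Hlt)); rewrite Hn.
    done.
  move: Hh; rewrite /hook1 Hn size_cat size_nseq => /eqP Hh.
  have Hh' : 1 + (size ν + m - s) + 1 = s + e by lia.
  have Hd : m - (size ν + e) = (s.-1 - size ν).*2 by rewrite -muln2; lia.
  split; first lia.
  by rewrite Hd odd_double.
- move=> [Hle Hev].
  set d := m - (size ν + e).
  have Hd : d = (d./2).*2.
    by have := odd_double_half d; rewrite (negbTE Hev) add0n.
  exists (size ν + 1 + d./2).
    rewrite mem_iota; apply/andP; split; first lia.
    move: Hd; rewrite -muln2 /d; lia.
  have Hn : nth 0 (ν ++ nseq m 1) (size ν + 1 + d./2).-1 = 1.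
    rewrite nth_cat ifF; last lia.
    rewrite nth_nseq ifT //.
    move: Hd; rewrite -muln2 /d; lia.
  rewrite /hook1 Hn eqxx andbT size_cat size_nseq; apply/eqP.
  move: Hd; rewrite -muln2 /d; lia.
Qed.

Definition encode n (l : seq nat) : n.-tuple 'I_n.+1 :=
  insubd (nseq_tuple n ord0) (map (@inord n) (take n (l ++ nseq n 0))).

Lemma encode_val n l : is_partition n l -> map val (encode n l) = l ++ nseq (n - size l) 0.
Proof.
move=> /and3P[Hs Hp /eqP Hn].
have Hsz : size l <= n by rewrite -Hn; exact: size_le_sumn.
have Htake : take n (l ++ nseq n 0) = l ++ nseq (n - size l) 0.
  rewrite take_cat ltnNge Hsz /= take_nseq //; exact: leq_subr.
rewrite /encode val_insubd size_map size_take size_cat size_nseq ifT; last first.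
  by apply/eqP; case: ltnP => //; lia.
rewrite Htake -map_comp; apply: map_id_in => x Hx /=; apply: inordK.
move: Hx; rewrite mem_cat => /orP[/mem_le_sumn|]; first lia.
by move/nseqP => [-> _].
Qed.

Lemma part_encode n l : is_partition n l -> part_of_code (encode n l) = l.
Proof.
move=> Hl; rewrite /part_of_code encode_val // filter_cat filter_nseq /= cats0.
by apply/all_filterP; case/and3P: Hl.
Qed.

Lemma code_encode n l : is_partition n l -> tuple_code (encode n l).
Proof.
move=> Hl; rewrite /tuple_code encode_val //; case/and3P: Hl => Hs Hp Hn.
rewrite sumn_cat sumn_nseq mul0n addn0 Hn andbT.
apply: (sorted_cat_geq 0) => //; first exact: sorted_nseq_geq.
  by apply/allP.
by rewrite all_nseq /= orbT.
Qed.

Lemma code_part n (t : n.-tuple 'I_n.+1) : tuple_code t -> is_partition n (part_of_code t).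
Proof.
move=> /andP[Hs /eqP Hn]; rewrite /is_partition /part_of_code.
rewrite (sorted_filter geq_trans) // filter_all /=.
rewrite (split_sorted 0 _ Hs) sumn_cat in Hn.
have Hz : sumn (filter (fun x => x <= 0) (map val t)) = 0.
  elim: (map val t) => //= x s IH; case: ifP => //= /[dup] H; rewrite leqn0 => /eqP ->.
  by rewrite IH.
by apply/eqP; move: Hn; rewrite Hz addn0.
Qed.

Arguments code_part {n t}.
Lemma encode_part n (t : n.-tuple 'I_n.+1) : tuple_code t -> encode n (part_of_code t) = t.
Proof.
move=> Ht; apply: val_inj; apply: (inj_map val_inj).
rewrite (encode_val _ _ (code_part Ht)).
case/andP: Ht => Hs _.
rewrite [RHS](split_sorted 0 _ Hs) /part_of_code; congr (_ ++ _).
have Hsz := congr1 size (split_sorted 0 _ Hs).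
rewrite size_cat size_map size_tuple in Hsz.
move: Hsz; set z := filter (fun x => x <= 0) (map val t); set p := filter _ _ => Hsz.
have Hz : all (pred1 0) z.
  apply/allP => x; rewrite mem_filter => /andP[H _]; move: H; by rewrite /= leqn0.
rewrite [RHS](all_pred1P _ _ Hz); congr nseq; by rewrite Hsz addKn.
Qed.

Arguments encode_part {n t}.

Lemma card_ext n (P P' : seq nat -> bool) : (forall l, is_partition n l -> P l = P' l) ->
  card_partitions_with n P = card_partitions_with n P'.
Proof.
move=> H; rewrite /card_partitions_with; apply: eq_card => t; rewrite !inE.
by case: (boolP (tuple_code t)) => //= Ht; apply: H; apply: code_part.
Qed.

Lemma card_le n (P Q : seq nat -> bool) f g :
  (forall l, is_partition n l -> P l -> [/\ is_partition n (f l), Q (f l) & g (f l) = l]) ->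
  card_partitions_with n P <= card_partitions_with n Q.
Proof.
move=> H; rewrite /card_partitions_with.
set A := [set t | _]; set F := fun t : n.-tuple 'I_n.+1 => encode n (f (part_of_code t)).
rewrite -(@card_in_imset _ _ F (mem A)); last first.
  move=> t1 t2; rewrite !inE => /andP[H1 P1] /andP[H2 P2] /(congr1 (@part_of_code n)).
  have [Hf1 _ Hg1] := H _ (code_part H1) P1.
  have [Hf2 _ Hg2] := H _ (code_part H2) P2.
  rewrite /F !part_encode // => /(congr1 g); rewrite Hg1 Hg2 => E.
  by rewrite -(encode_part H1) -(encode_part H2) E.
apply: subset_leq_card; apply/subsetP => _ /imsetP[t Ht ->].
move: Ht; rewrite !inE => /andP[H1 P1].
have [Hf Qf _] := H _ (code_part H1) P1.
by rewrite /F code_encode // part_encode.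
Qed.

Theorem theorem3p2 (h : int) (n : nat) :
  (-1 <= h)%R -> ~ (n = 0%N /\ h = (-1)%R) ->
  card_partitions_with n (has_fixed_hook h 1)
  = card_partitions_with n (fun lam => Posz (count_mem 1%N lam) == (h + 1)%R).
Proof.
move=> Hh Hn0.
have [e He] : exists e : nat, h = (Posz e - 1)%R.
  case: h Hh Hn0 => k Hk _; first by exists k.+1; lia.
  by exists 0; lia.
have Hpos : 0 < n \/ 0 < e.
  case: n Hn0 => [|n] H; last by left.
  case: e He => [|e] He; last by right.
  by exfalso; apply: H; split => //; rewrite He.
subst h.
rewrite (@card_ext n _ (condP e)); last first.
  move=> l Hl; have /and3P[Hs Hp /eqP Hn] := Hl.
  have Hd := decomp1 l Hs Hp.
  rewrite {1}Hd hook_cond //; first exact: filter_all.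
  case: Hpos => [Hn'|]; last lia.
  have : 0 < size l.
    case: l Hl Hd Hs Hp Hn => //= Hl _ _ _ Hn; lia.
  by rewrite {1}Hd size_cat size_nseq; lia.
rewrite [RHS](@card_ext n _ (fun l => count_mem 1 l == e)); last first.
  by move=> l _; apply/eqP/eqP; lia.
apply/eqP; rewrite eqn_leq; apply/andP; split.
  by apply: (@card_le _ _ _ (fmap e) (gmap e)) => l Hl HP; apply: f_ok.
by apply: (@card_le _ _ _ (gmap e) (fmap e)) => l Hl HP; apply: g_ok.
Qed.
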